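(* Let $v:\mathcal{X}\times\{\theta_1,\ldots,\theta_M\}\to[0,\infty)$ be measurable with ${\rm E}\big[\sum_{i=1}^M P(\theta_i|\mathbf{x})\,v(\mathbf{x},\theta_i)\big]<\infty$. Then the quantity ${\rm E}\big[u_{\hat\theta}(\mathbf{x},\theta)\,v(\mathbf{x},\theta)\big]$ takes the same value for every detector $\hat\theta$ if and only if there exists a measurable function $\zeta:\mathcal{X}\to[0,\infty)$ such that, for almost every $\mathbf{x}$, $$v(\mathbf{x},\theta_i)=\frac{\zeta(\mathbf{x})}{P(\theta_i|\mathbf{x})},\qquad i=1,\ldots,M .$$ In that case ${\rm E}[u_{\hat\theta}(\mathbf{x},\theta)v(\mathbf{x},\theta)]=(M-1)\,{\rm E}[\zeta(\mathbf{x})]$ for every detector $\hat\theta$.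
   Context: $M$-ary hypothesis testing: the true hypothesis $\theta$ is a random variable taking values in $\{\theta_1,\ldots,\theta_M\}$ with prior probabilities $P(\theta_i)$, and $\mathbf{x}$ is a random observation with values in a measurable space $\mathcal{X}$. $P(\theta_i|\mathbf{x})$ denotes the posterior probability of $\theta_i$ given $\mathbf{x}$; it is assumed that $P(\theta_i|\mathbf{x})>0$ for all $\mathbf{x}$ and all $i$. A detector is a measurable map $\hat\theta:\mathcal{X}\to\{\theta_1,\ldots,\theta_M\}$. For a detector $\hat\theta$, $u_{\hat\theta}(\mathbf{x},\theta)=\mathbf{1}_{\hat\theta(\mathbf{x})\neq\theta}$ (equal to $1$ if $\hat\theta(\mathbf{x})\neq\theta$ and $0$ otherwise). All expectations are with respect to the joint law of $(\mathbf{x},\theta)$. *)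

(* Defs.v *)
From HB Require Import structures.
From mathcomp Require Import all_boot all_order all_algebra.
From mathcomp Require Import all_classical all_reals all_analysis.
Set Implicit Arguments. Unset Strict Implicit. Unset Printing Implicit Defensive.
Import Order.TTheory GRing.Theory Num.Theory.
Local Open Scope ring_scope.
Local Open Scope classical_set_scope.

(* Model of M-ary hypothesis testing: hypotheses theta_1..theta_M are indexed by
   'I_M; mu is the law (marginal) of the observation x on T; p x i is the
   posterior P(theta_i | x).  The joint law of (x, theta) is
     E[f(x,theta)] = \int[mu]_x \sum_i p x i * f x i. *)

Definition detector (d0 : measure_display) (T : measurableType d0)
  (M : nat) (dt : T -> 'I_M) : Prop :=
  forall i : 'I_M, measurable [set x | dt x = i].

(* E[ u_dt(x,theta) v(x,theta) ] with u_dt(x,theta) = 1_{dt x <> theta}. *)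
Definition weighted_risk (R : realType) (d0 : measure_display) (T : measurableType d0)
  (M : nat) (mu : probability T R) (p v : T -> 'I_M -> R) (dt : T -> 'I_M) : \bar R :=
  (\int[mu]_x (\sum_(i < M) p x i * (dt x != i)%:R * v x i)%:E)%E.

(* Main.v *)
Require Import Defs.
From HB Require Import structures.
From mathcomp Require Import all_boot all_order all_algebra.
From mathcomp Require Import all_classical all_reals all_analysis.
From mathcomp Require Import measurable_realfun.
Import Order.TTheory GRing.Theory Num.Theory.
Local Open Scope ring_scope.
Local Open Scope classical_set_scope.

Lemma Wsum (R : pzRingType) (M : nat) (d : 'I_M) (w : 'I_M -> R) :
  \sum_(i < M) (d == i)%:R * w i = w d.
Proof.
rewrite (bigD1 d) //= eqxx mul1r big1 ?addr0 // => i /negPf.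
by rewrite eq_sym => ->; rewrite mul0r.
Qed.

Lemma risk_pt (R : comPzRingType) (M : nat) (d : 'I_M) (p v : 'I_M -> R) :
  \sum_(i < M) p i * (d != i)%:R * v i = \sum_(i < M) p i * v i - p d * v d.
Proof.
rewrite [in RHS](bigD1 d) //= addrAC subrr add0r (bigD1 d) //= eqxx mulr0 mul0r add0r.
by apply: eq_bigr => i; rewrite eq_sym => ->; rewrite mulr1.
Qed.

Lemma sum_neq (R : numDomainType) (n : nat) (d : 'I_n.+1) :
  \sum_(i < n.+1) ((d != i)%:R : R) = n%:R.
Proof.
have -> : \sum_(i < n.+1) ((d != i)%:R : R) = \sum_(i < n.+1) (1 - (d == i)%:R * 1).
  by apply: eq_bigr => i _; case: (d == i); rewrite /= ?mulr1 ?subrr ?subr0.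
rewrite sumrB Wsum sumr_const card_ord -natr1 addrK //.
Qed.

Lemma detector_if (d0 : measure_display) (T : measurableType d0) (M : nat)
  (b : T -> bool) (j k : 'I_M) : measurable [set x | b x] ->
  detector (fun x => if b x then j else k).
Proof.
move=> mb i.
have mc : forall P : Prop, measurable [set _ : T | P].
  move=> P; case: (pselect P) => h.
    by rewrite (_ : [set _ | P] = setT) //; apply/seteqP; split.
  by rewrite (_ : [set _ | P] = set0) //; apply/seteqP; split.
rewrite (_ : [set x | (if b x then j else k) = i] =
  ([set x | b x] `&` [set _ | j = i]) `|` (~` [set x | b x] `&` [set _ | k = i])).
  by apply: measurableU; apply: measurableI => //; apply: measurableC.
apply/seteqP; split => x /=.
  case: (b x) => h.
    by left.
  by right.
by case: (b x) => -[[h e]|[h e]].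
Qed.

Theorem theorem1 (R : realType) (d0 : measure_display) (T : measurableType d0)
  (M : nat) (mu : probability T R) (p v : T -> 'I_M -> R)
  (p_meas : forall i : 'I_M, measurable_fun setT (fun x => p x i))
  (p_pos : forall x i, 0 < p x i)
  (p_sum1 : forall x, \sum_(i < M) p x i = 1)
  (v_meas : forall i : 'I_M, measurable_fun setT (fun x => v x i))
  (v_ge0 : forall x i, 0 <= v x i)
  (v_int : (\int[mu]_x (\sum_(i < M) p x i * v x i)%:E < +oo)%E) :
  ((exists c : \bar R, forall dt : T -> 'I_M, detector dt ->
       weighted_risk mu p v dt = c)
   <->
   (exists zeta : T -> R, measurable_fun setT zeta /\ (forall x, 0 <= zeta x) /\
       {ae mu, forall x, forall i : 'I_M, v x i = zeta x / p x i}))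
  /\
  (forall zeta : T -> R, measurable_fun setT zeta -> (forall x, 0 <= zeta x) ->
     {ae mu, forall x, forall i : 'I_M, v x i = zeta x / p x i} ->
     forall dt : T -> 'I_M, detector dt ->
       (weighted_risk mu p v dt = ((M - 1)%:R)%:E * \int[mu]_x (zeta x)%:E)%E).
Proof.
destruct M as [|n].
  exfalso.
  have : setT != set0 :> set T.
    apply/eqP => h; have := probability_setT mu; rewrite h measure0 => /eqP.
    by rewrite eq_sym onee_eq0.
  case/set0P => x _; have := p_sum1 x; rewrite big_ord0 => /eqP.
  by rewrite eq_sym oner_eq0.
pose w i x := p x i * v x i.
pose S x := \sum_(i < n.+1) w i x.
have mw : forall i, measurable_fun setT (w i).
  by move=> i; apply: measurable_realfun.measurable_funM.
have w0 : forall i x, 0 <= w i x.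
  by move=> i x; apply: mulr_ge0 => //; apply: ltW.
have wS : forall i x, w i x <= S x.
  move=> i x; rewrite /S (bigD1 i) //= lerDl; exact: sumr_ge0.
have mS : measurable_fun setT S.
  by apply: measurable_sum.
have intS : mu.-integrable setT (EFin \o S).
  apply/integrableP; split; first exact/measurable_realfun.measurable_EFinP.
  apply: le_lt_trans v_int; rewrite le_eqVlt; apply/orP; left; apply/eqP.
  apply: eq_integral => x _ /=; rewrite ger0_norm //; exact: sumr_ge0.
have intf : forall f : T -> R, measurable_fun setT f -> (forall x, 0 <= f x <= S x) ->
    mu.-integrable setT (EFin \o f).
  move=> f mf hf; apply: le_integrable intS => //; first exact/measurable_realfun.measurable_EFinP.
  move=> x _ /=; have /andP[h1 h2] := hf x.
  rewrite !ger0_norm //; last exact: le_trans h2.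
have mW : forall dt, detector dt -> measurable_fun setT (fun x => w (dt x) x).
  move=> dt hdt.
  have -> : (fun x => w (dt x) x) =
      (fun x => \sum_(i < n.+1) \1_[set x | dt x = i] x * w i x).
    apply/funext => x; rewrite -[LHS](Wsum _ _ (dt x) (fun i => w i x)); apply: eq_bigr => i _.
    rewrite indicE; congr (_%:R * _).
    congr (nat_of_bool _); apply/idP/idP => [/eqP h|]; rewrite inE //; by move=> ->.
  apply: measurable_sum => i; apply: measurable_realfun.measurable_funM => //.
have riskE : forall dt, detector dt -> weighted_risk mu p v dt =
    (\int[mu]_x (S x)%:E - \int[mu]_x (w (dt x) x)%:E)%E.
  move=> dt hdt; rewrite /weighted_risk -integralB_EFin //; last first.
    by apply: intf; [exact: mW | move=> x; rewrite w0 wS].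
  by apply: eq_integral => x _; rewrite risk_pt -EFinB.
have finS : (\int[mu]_x (S x)%:E)%E \is a fin_num.
  have h := integrable_fin_num measurableT intS. exact h.
have intW : forall dt, detector dt -> mu.-integrable setT (EFin \o (fun x => w (dt x) x)).
  by move=> dt hdt; apply: intf; [exact: mW | move=> x; rewrite w0 wS].
have eqW : forall d1 d2, detector d1 -> detector d2 ->
    weighted_risk mu p v d1 = weighted_risk mu p v d2 ->
    (\int[mu]_x (w (d1 x) x)%:E = \int[mu]_x (w (d2 x) x)%:E)%E.
  move=> d1 d2 h1 h2; rewrite (riskE _ h1) (riskE _ h2).
  have f1 := integrable_fin_num measurableT (intW _ h1).
  have f2 := integrable_fin_num measurableT (intW _ h2).
  rewrite -(fineK finS) -(fineK f1) -(fineK f2) -!EFinB => -[] /addrI /oppr_inj -> //.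
have G : forall f g : T -> R, measurable_fun setT f -> measurable_fun setT g ->
    (forall x, 0 <= g x <= f x) -> (forall x, f x <= S x) ->
    (\int[mu]_x (f x)%:E = \int[mu]_x (g x)%:E)%E -> {ae mu, forall x, f x = g x}.
  move=> f g mf mg hgf hfS hint.
  have intf' : mu.-integrable setT (EFin \o f).
    apply: intf => // x; have /andP[h1 h2] := hgf x.
    by rewrite hfS (le_trans h1 h2).
  have intg' : mu.-integrable setT (EFin \o g).
    apply: intf => // x; have /andP[h1 h2] := hgf x.
    by rewrite h1 (le_trans h2 (hfS x)).
  have mfg : measurable_fun setT (fun x => (f x - g x)%:E).
    by apply/measurable_realfun.measurable_EFinP; exact: measurable_realfun.measurable_funB.
  have : (\int[mu]_x `|(f x - g x)%:E| = 0)%E.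
    transitivity (\int[mu]_x ((f x)%:E - (g x)%:E))%E.
      apply: eq_integral => x _; have /andP[h1 h2] := hgf x.
      by rewrite gee0_abs ?lee_fin ?subr_ge0 // EFinB.
    rewrite integralB_EFin // hint subee //.
    have h := integrable_fin_num measurableT intg'. exact h.
  move/(ae_eq_integral_abs mu measurableT mfg) => H.
  move: H; apply: filterS => x /(_ I) [] /eqP; rewrite subr_eq0 => /eqP //.
have part2 : forall zeta : T -> R, measurable_fun setT zeta -> (forall x, 0 <= zeta x) ->
     {ae mu, forall x, forall i : 'I_n.+1, v x i = zeta x / p x i} ->
     forall dt : T -> 'I_n.+1, detector dt ->
       (weighted_risk mu p v dt = ((n.+1 - 1)%:R)%:E * \int[mu]_x (zeta x)%:E)%E.
  move=> zeta mz z0 hae dt hdt.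
  have mf : measurable_fun setT (fun x => \sum_(i < n.+1) p x i * (dt x != i)%:R * v x i).
    have -> : (fun x => \sum_(i < n.+1) p x i * (dt x != i)%:R * v x i) =
        (fun x => S x - w (dt x) x) by apply/funext => x; rewrite risk_pt.
    exact: measurable_funB mS (mW _ hdt).
  rewrite /weighted_risk subn1 /=.
  have -> : (\int[mu]_x (\sum_(i < n.+1) p x i * (dt x != i)%:R * v x i)%:E =
      \int[mu]_x (n%:R * zeta x)%:E)%E.
    apply: ae_eq_integral => //.
    - exact/measurable_EFinP.
    - by apply/measurable_EFinP; apply: measurable_funM => //; exact: measurable_cst.
    move: hae; apply: filterS => x hx _; congr EFin.
    rewrite (eq_bigr (fun i => (dt x != i)%:R * zeta x)); last first.
      move=> i _; rewrite hx -mulrA mulrCA [p x i * _]mulrCA divff ?mulr1 //.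
      exact: lt0r_neq0.
    by rewrite -mulr_suml sum_neq.
  rewrite (eq_integral (fun x => n%:R%:E * (zeta x)%:E)%E); last by move=> x _; rewrite EFinM.
  rewrite ge0_integralZl_EFin //.
  - by move=> x _; rewrite lee_fin.
  - exact/measurable_EFinP.
split => //; split; last first.
  case=> zeta [mz [z0 hae]].
  exists (((n.+1 - 1)%:R)%:E * \int[mu]_x (zeta x)%:E)%E => dt hdt.
  exact: part2.
case=> c hc.
have dzero : detector (fun _ : T => (ord0 : 'I_n.+1)).
  move=> i; case: (pselect (ord0 = i)) => h.
    by rewrite (_ : [set _ | _] = setT) //; apply/seteqP; split.
  by rewrite (_ : [set _ | _] = set0) //; apply/seteqP; split.
have mlt : forall i k, measurable [set x | w i x < w k x].
  move=> i k; rewrite (_ : [set x | _] = setT `&` [set x | ((w i x)%:E < (w k x)%:E)%E]).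
    by apply: measurable_lte => //; apply/measurable_EFinP.
  by apply/seteqP; split => x /=; rewrite lte_fin //; case.
have hj : forall j, {ae mu, forall x, w j x = w ord0 x}.
  move=> j.
  pose dmax x := if w ord0 x < w j x then j else ord0.
  pose dmin x := if w j x < w ord0 x then j else ord0.
  have hmax : detector dmax by apply: detector_if.
  have hmin : detector dmin by apply: detector_if.
  have e1 := eqW _ _ hmax dzero (etrans (hc _ hmax) (esym (hc _ dzero))).
  have e2 := eqW _ _ dzero hmin (etrans (hc _ dzero) (esym (hc _ hmin))).
  have A1 : {ae mu, forall x, w (dmax x) x = w ord0 x}.
    apply: G => //; first exact: mW.
    by move=> x; rewrite /dmax; case: ifP => h; rewrite w0 //= ?lexx // ltW.
  have A2 : {ae mu, forall x, w ord0 x = w (dmin x) x}.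
    apply: G => //; first exact: mW.
    by move=> x; rewrite /dmin; case: ifP => h; rewrite w0 //= ?lexx // ltW.
  move: A1 A2; apply: filterS2 => x; rewrite /dmax /dmin.
  by case: ltgtP => h e1' e2' //; rewrite e2'.
have hall : {ae mu, forall x, forall k : nat, forall h : (k < n.+1)%N, w (Ordinal h) x = w ord0 x}.
  have H : forall k, \forall x \ae mu, forall h : (k < n.+1)%N, w (Ordinal h) x = w ord0 x.
    move=> k; case: (pselect (k < n.+1)%N) => hk; last first.
      by apply: nearW => x h; exfalso; exact: hk.
    move: (hj (Ordinal hk)); apply: filterS => x hx h.
    by rewrite (_ : Ordinal h = Ordinal hk) //; apply: val_inj.
  exact: (ae_foralln (P := fun k x => forall h : (k < n.+1)%N, w (Ordinal h) x = w ord0 x) H).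
exists (w ord0); split; first exact: mw.
split; first by move=> x; exact: w0.
move: hall; apply: filterS => x hx i.
have := hx i (ltn_ord i); rewrite (_ : Ordinal (ltn_ord i) = i); last by apply: val_inj.
move=> <-; rewrite /w [p x i * _]mulrC mulfK //; exact: lt0r_neq0.
Qed.
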